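(* Let $v\ge 0$. The optimal value of $$\min_{y\in\mathbb{R}^{n^+}}\ \sum_{j=1}^{n^+} y_j^{1/\alpha}\quad\text{s.t.}\quad 0\le y_1\le\cdots\le y_{n^+},\qquad \sum_{j=1}^{n^+} h^+_j y_j=v$$ equals $$v^{1/\alpha}\cdot\frac{J}{\left[\left(\sum_{j=1}^{J}h^+_j\right)^{\frac{1}{1-\alpha}}+\sum_{j=J+1}^{n^+}\left(J^{\alpha}h^+_j\right)^{\frac{1}{1-\alpha}}\right]^{\frac{1-\alpha}{\alpha}}},$$ where $J$ is the transitional index.
   Context: Fix $N\in\mathbb{N}$, $\alpha\in(0,1)$ and an integer $1\le n^+\le N$. A function $f:[0,1]\to\mathbb{R}$ is inverse S-shaped if it is strictly increasing, continuously differentiable, and there is $x_0\in[0,1]$ such that $f'$ is strictly decreasing on $[0,x_0]$ and strictly increasing on $[x_0,1]$. Let $W^+:[0,1]\to[0,1]$ be inverse S-shaped with $W^+(0)=0$, $W^+(1)=1$. Decision weights: $h^+_j:=W^+\!\left(\frac{n^+-j+1}{N}\right)-W^+\!\left(\frac{n^+-j}{N}\right)$ for $j=1,\dots,n^+$. The transitional index is $J:=\min\{j\in\{1,\dots,n^+\}: j\,h^+_{j+1}\ge \sum_{j'=1}^{j}h^+_{j'}\}$, with the convention $h^+_{n^++1}=\infty$. *)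

(* Defs.v *)
From HB Require Import structures.
From mathcomp Require Import all_boot all_order all_algebra.
From mathcomp Require Import all_classical all_reals all_analysis.
Set Implicit Arguments. Unset Strict Implicit. Unset Printing Implicit Defensive.
Import Order.TTheory GRing.Theory Num.Theory.
Import numFieldNormedType.Exports.
Local Open Scope classical_set_scope.
Local Open Scope ring_scope.

Section Defs.
Variable R : realType.

Definition inverse_S_shaped (f : R -> R) : Prop :=
  (forall x y, 0 <= x -> x < y -> y <= 1 -> f x < f y) /\
  (forall x, 0 <= x <= 1 -> derivable f x 1) /\
  {within [set x : R | 0 <= x <= 1], continuous (derive1 f)} /\
  (exists x0, 0 <= x0 <= 1 /\
     (forall x y, 0 <= x -> x < y -> y <= x0 -> (derive1 f) y < (derive1 f) x) /\
     (forall x y, x0 <= x -> x < y -> y <= 1 -> (derive1 f) x < (derive1 f) y)).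

(* decision weights h^+_j, meaningful for 1 <= j <= nplus *)
Definition hplus (W : R -> R) (N nplus j : nat) : R :=
  W ((nplus - j + 1)%:R / N%:R) - W ((nplus - j)%:R / N%:R).

(* the condition defining the transitional index, with h^+_{n^+ + 1} = +oo *)
Definition trans_cond (W : R -> R) (N nplus j : nat) : bool :=
  (j == nplus) ||
  (\sum_(1 <= i < j.+1) hplus W N nplus i <= j%:R * hplus W N nplus j.+1).

Definition trans_index (W : R -> R) (N nplus : nat) : nat :=
  (find (trans_cond W N nplus) (iota 1 nplus)).+1.

Definition feasible (W : R -> R) (N nplus : nat) (v : R) (y : nat -> R) : Prop :=
  0 <= y 1%N /\
  (forall j, (1 <= j)%N -> (j < nplus)%N -> y j <= y j.+1) /\
  \sum_(1 <= j < nplus.+1) hplus W N nplus j * y j = v.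

Definition objective (alpha : R) (nplus : nat) (y : nat -> R) : R :=
  \sum_(1 <= j < nplus.+1) (y j) `^ (alpha^-1).

End Defs.

(* Main.v *)
Require Import Defs.
From HB Require Import structures.
From mathcomp Require Import all_boot all_order all_algebra.
From mathcomp Require Import all_classical all_reals all_analysis.
From mathcomp Require Import zify.
From mathcomp.algebra_tactics Require Import ring lra.
Set Implicit Arguments. Unset Strict Implicit.
Import Order.TTheory GRing.Theory Num.Theory.
Import numFieldNormedType.Exports.
Local Open Scope classical_set_scope.
Local Open Scope ring_scope.

Section MVTpart.
Variable R : realType.

Lemma mvtW (W : R -> R) a b :
  (forall x, 0 <= x <= 1 -> derivable W x 1) -> 0 <= a -> a < b -> b <= 1 ->
  exists2 c, a < c < b & W b - W a = derive1 W c * (b - a).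
Proof.
move=> dW a0 ab b1.
have dW' : {in `[a, b], forall x, derivable W x 1}.
  move=> x; rewrite in_itv /= => /andP[ax xb]; apply: dW.
  apply/andP; split; [exact: le_trans ax|exact: le_trans b1].
have cW : {within `[a, b], continuous W} by exact: derivable_within_continuous.
have HM z : z \in `]a, b[%R -> is_derive z 1 W (derive1 W z).
  move=> zab; rewrite derive1E; apply/derivableP/dW'.
  by rewrite in_itv /= !ltW ?(itvP zab).
have [c cab ->] := MVT ab HM cW.
by exists c => //; rewrite (itvP cab) (itvP cab).
Qed.

Lemma no_peak (W : R -> R) d s : inverse_S_shaped W -> 0 < d -> 0 <= s -> s + 3%:R * d <= 1 ->
  W (s + d) - W s < W (s + 2%:R * d) - W (s + d) ->
  W (s + 2%:R * d) - W (s + d) < W (s + 3%:R * d) - W (s + 2%:R * d).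
Proof.
move=> [_ [dW [_ [x0 [/andP[x00 x01] [dec inc]]]]]] d0 s0 s3 AB.
have h1 : s < s + d by lra.
have h2 : s + d <= 1 by lra.
have h3 : 0 <= s + d by lra.
have h4 : s + d < s + 2%:R * d by lra.
have h5 : s + 2%:R * d <= 1 by lra.
have h6 : 0 <= s + 2%:R * d by lra.
have h7 : s + 2%:R * d < s + 3%:R * d by lra.
have [e1 /andP[e1a e1b] E1] := @mvtW W _ _ dW s0 h1 h2.
have [e2 /andP[e2a e2b] E2] := @mvtW W _ _ dW h3 h4 h5.
have [e3 /andP[e3a e3b] E3] := @mvtW W _ _ dW h6 h7 s3.
rewrite E2 E3; rewrite E1 E2 in AB.
have -> : s + 2%:R * d - (s + d) = d by ring.
have -> : s + 3%:R * d - (s + 2%:R * d) = d by ring.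
rewrite ltr_pM2r //.
have e12 : derive1 W e1 < derive1 W e2.
  move: AB; have -> : s + 2%:R * d - (s + d) = d by ring.
  have -> : s + d - s = d by ring.
  by rewrite ltr_pM2r.
have x0e2 : x0 < e2.
  rewrite ltNge; apply/negP => e2x0.
  have g1 : 0 <= e1 by lra.
  have g2 : e1 < e2 by lra.
  have := dec e1 e2 g1 g2 e2x0.
  by rewrite ltNge (ltW e12).
apply: inc; lra.
Qed.
End MVTpart.

Section Hpart.
Variable R : realType.
Variables (N n : nat) (W : R -> R).
Hypotheses (n1 : (1 <= n)%N) (nN : (n <= N)%N) (WS : inverse_S_shaped W).
Local Notation h := (hplus W N n).

Lemma Npos : (0 < N)%N.
Proof. by apply: leq_trans nN. Qed.

Lemma h_gt0 j : (1 <= j)%N -> (j <= n)%N -> 0 < h j.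
Proof.
move=> j1 jn; rewrite /hplus subr_gt0.
have N0 : (0 : R) < N%:R by rewrite ltr0n Npos.
case: WS => inc _; apply: inc.
- by rewrite divr_ge0.
- by rewrite ltr_pM2r ?invr_gt0 // ltr_nat addn1.
- by rewrite ler_pdivrMr // mul1r ler_nat; lia.
Qed.

Lemma hP k : (1 <= k)%N -> (k.+2 <= n)%N -> h (k.+2) < h k.+1 -> h k.+1 < h k.
Proof.
move=> k1 kn.
have N0 : (N%:R : R) != 0 by rewrite pnatr_eq0 -lt0n Npos.
set m := (n - k.+2)%N.
have E2 : (n - k.+2 + 1 = m + 1)%N by [].
have E1a : (n - k.+1 = m + 1)%N by rewrite /m; lia.
have E1b : (n - k.+1 + 1 = m + 2)%N by rewrite /m; lia.
have E0a : (n - k = m + 2)%N by rewrite /m; lia.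
have E0b : (n - k + 1 = m + 3)%N by rewrite /m; lia.
rewrite /hplus E2 E1b E1a E0b E0a.
set s := (m%:R / N%:R : R); set d := (1 / N%:R : R).
have E i : ((m + i)%:R / N%:R : R) = s + i%:R * d.
  by rewrite /s /d natrD; field.
rewrite !E.
have -> : s + 1%:R * d = s + d by rewrite mul1r.
apply: no_peak => //.
- by rewrite /d divr_gt0 // ltr0n Npos.
- by rewrite /s divr_ge0.
- rewrite -E ler_pdivrMr ?ltr0n ?Npos // mul1r ler_nat /m; lia.
Qed.
End Hpart.

Section Jpart.
Variable R : realType.
Variables (N n : nat) (W : R -> R).
Hypotheses (n1 : (1 <= n)%N) (nN : (n <= N)%N) (WS : inverse_S_shaped W).
Local Notation h := (hplus W N n).
Local Notation S k := (\sum_(1 <= i < k.+1) h i).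
Local Notation J := (trans_index W N n).

Lemma J_spec : [/\ (1 <= J)%N, (J <= n)%N, trans_cond W N n J &
  (forall k, (1 <= k)%N -> (k < J)%N -> k%:R * h k.+1 < S k)].
Proof.
rewrite /trans_index; set P := trans_cond W N n.
have hasP : has P (iota 1 n).
  apply/hasP; exists n; first by rewrite mem_iota; lia.
  by rewrite /P /trans_cond eqxx.
have := hasP; rewrite has_find size_iota => fn.
split => //.
- have := nth_find 0 hasP; rewrite nth_iota //.
- move=> k k1 kJ.
  have kf : (k.-1 < find P (iota 1 n))%N by lia.
  have := before_find 0 kf; rewrite nth_iota; last by lia.
  have -> : (1 + k.-1 = k)%N by lia.
  rewrite /P /trans_cond => /negbT; rewrite negb_or => /andP[_].
  by rewrite -ltNge.
Qed.
End Jpart.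

Section Kpart.
Variable R : realType.
Variables (N n : nat) (W : R -> R).
Hypotheses (n1 : (1 <= n)%N) (nN : (n <= N)%N) (WS : inverse_S_shaped W).
Local Notation h := (hplus W N n).
Local Notation S k := (\sum_(1 <= i < k.+1) h i).
Local Notation J := (trans_index W N n).

Lemma S0 : S 0 = 0.
Proof. by rewrite big_geq. Qed.

Lemma SS m : S m.+1 = S m + h m.+1.
Proof. by rewrite big_nat_recr. Qed.


Lemma avg k m : (k <= m)%N -> (m <= J)%N -> k%:R * S m <= m%:R * S k.
Proof.
have [_ _ _ HJ] := J_spec W n1 nN.
elim: m => [|m IH] km mJ.
  by move: km; rewrite leqn0 => /eqP ->.
case: (ltngtP k m.+1) => [kl|//|-> //]; last by lia.
have {}IH : k%:R * S m <= m%:R * S k by apply: IH; lia.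
have [->|k0] := posnP k; first by rewrite S0 mul0r mulr0.
have Hm : m%:R * h m.+1 < S m by apply: HJ; lia.
rewrite SS.
have m0 : (0 : R) < m%:R by rewrite ltr0n; lia.
have k0' : (0 : R) <= k%:R by [].
rewrite -(ler_pM2l m0).
rewrite -natr1.
have P1' : 0 <= k%:R * (S m - m%:R * h m.+1).
  by apply: mulr_ge0 => //; rewrite subr_ge0 ltW.
have P2' : (m%:R + 1) * (k%:R * S m) <= (m%:R + 1) * (m%:R * S k).
  by apply: ler_wpM2l => //; lra.
nra.
Qed.

Lemma J_gt0 : (0 < J)%N.
Proof. by have [] := J_spec W n1 nN. Qed.

Lemma J_le : (J <= n)%N.
Proof. by have [] := J_spec W n1 nN. Qed.

Lemma cheb (y : nat -> R) :
  (forall j, (1 <= j)%N -> (j < n)%N -> y j <= y j.+1) ->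
  \sum_(1 <= j < J.+1) h j * y j <= (S J / J%:R) * \sum_(1 <= j < J.+1) y j.
Proof.
move=> ymon; set a := S J / J%:R.
have J0 : (0 : R) < J%:R by rewrite ltr0n J_gt0.
have claim m : (m <= J)%N ->
  \sum_(1 <= j < m.+1) (h j - a) * y j <= (S m - m%:R * a) * y m.
  elim: m => [|m IH] mJ; first by rewrite big_geq // S0 mul0r subrr mul0r.
  rewrite big_nat_recr //= SS.
  have {}IH := IH (ltnW mJ).
  have Em : 0 <= (S m - m%:R * a) * (y m.+1 - y m).
    have [->|m0] := posnP m; first by rewrite S0 mul0r subrr mul0r.
    apply: mulr_ge0; last by rewrite subr_ge0 ymon //; have := J_le; lia.
    rewrite subr_ge0 /a mulrA ler_pdivrMr //.
    have mJ' : (m <= J)%N by lia.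
    have := avg mJ' (leqnn J).
    by rewrite [S m * _]mulrC.
  rewrite -natr1; nra.
have := claim J (leqnn J).
rewrite /a mulrCA mulfV ?gt_eqF // mulr1 subrr mul0r.
move=> H; rewrite -subr_le0; apply: le_trans H; rewrite le_eqVlt; apply/orP; left.
apply/eqP; rewrite mulr_sumr -sumrB; apply/eqP; rewrite eq_sym; apply/eqP.
by apply: eq_bigr => j _; rewrite mulrBl mulrC.
Qed.

Lemma chain j : (1 <= j)%N -> (j < n)%N -> h j.+1 < h j ->
  forall i, (1 <= i)%N -> (i <= j)%N -> h j.+1 < h i.
Proof.
elim: j => [//|j IH] j1 jn hj i i1 ij.
case: (ltngtP i j.+1) => [il|//|-> //]; last by lia.
have j0 : (1 <= j)%N by lia.
have hj' := hP n1 nN WS j0 jn hj.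
apply: lt_trans hj _; apply: IH => //; lia.
Qed.

Lemma tail j : (J <= j)%N -> (j < n)%N -> h j <= h j.+1.
Proof.
have [J1 Jn TC HJ] := J_spec W n1 nN.
have base : (J < n)%N -> h J <= h J.+1.
  move=> Jn'; rewrite leNgt; apply/negP => hlt.
  move: TC; rewrite /trans_cond (_ : (J == n) = false) /=; last by apply/negbTE; rewrite neq_ltn Jn'.
  apply/negP; rewrite -ltNge.
  have -> : J%:R * h J.+1 = \sum_(1 <= i < J.+1) h J.+1.
    by rewrite sumr_const_nat subn1 /= mulr_natl.
  apply: ltr_sum_nat; first by lia.
  move=> i /andP[i1 iJ]; apply: chain => //; lia.
move=> Jj jn.
have [d Ed] : exists d, j = (J + d)%N by exists (j - J)%N; lia.
rewrite Ed in jn *; clear Ed Jj j.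
elim: d jn => [|d IH] jn.
  by rewrite addn0 in jn *; apply: base.
rewrite leNgt; apply/negP => hlt.
have a1 : (1 <= J + d)%N by lia.
have a2 : ((J + d).+2 <= n)%N by lia.
rewrite !addnS in hlt.
have := hP n1 nN WS a1 a2 hlt.
apply/negP; rewrite -leNgt; apply: IH; lia.
Qed.
End Kpart.

Section Pow.
Variable R : realType.

Lemma tangent (p x z : R) : 1 < p -> 0 <= x -> 0 <= z ->
  z `^ p + p * z `^ (p - 1) * (x - z) <= x `^ p.
Proof.
move=> p1 x0 z0.
have p0 : 0 < p by lra.
have pm0 : p - 1 != 0 by rewrite subr_eq0 gt_eqF.
set q := p / (p - 1).
have q0 : 0 < q by rewrite /q divr_gt0 //; lra.
have pq : p^-1 + q^-1 = 1 by rewrite /q invf_div; field; rewrite gt_eqF.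
have Y := conjugate_powR x0 (powR_ge0 z (p - 1)) p0 q0 pq.
rewrite -powRrM (_ : (p - 1) * q = p) in Y; last by rewrite /q; field.
rewrite -(mulr_powRB1 z0 p0) in Y *.
set z1 := z `^ (p - 1) in Y *; set X := x `^ p in Y *.
have Y' : p * (x * z1) <= X + (p - 1) * (z * z1).
  have := ler_wpM2l (ltW p0) Y.
  have -> : p * (X / p + z * z1 / q) = X + (p - 1) * (z * z1).
    by rewrite /q; field; rewrite pm0 gt_eqF.
  done.
have -> : z * z1 + p * z1 * (x - z) = p * (x * z1) - (p - 1) * (z * z1) by ring.
lra.
Qed.

Lemma powRV (x r : R) : 0 < x -> (x^-1) `^ r = (x `^ r)^-1.
Proof.
move=> x0.
have xr0 : x `^ r != 0 by rewrite gt_eqF // powR_gt0.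
apply: (mulIf xr0); rewrite mulVf // -powRM ?invr_ge0 ?ltW //.
by rewrite mulVf ?gt_eqF // powR1.
Qed.
End Pow.

Ltac nlia := repeat match goal with H : ?T |- _ =>
  lazymatch type of T with
  | Prop => lazymatch T with
    | is_true (_ <= _)%N => fail
    | is_true (_ < _)%N => fail
    | _ => clear H
    end
  end end; lia.
Section Main.
Variable R : realType.
Variables (N n : nat) (alpha : R) (W : R -> R) (v : R).
Hypotheses (n1 : (1 <= n)%N) (nN : (n <= N)%N) (al : 0 < alpha < 1)
  (WS : inverse_S_shaped W) (v0 : 0 <= v).
Local Notation h := (hplus W N n).
Local Notation S k := (\sum_(1 <= i < k.+1) h i).
Local Notation J := (trans_index W N n).
Let p := alpha^-1.
Let q := (1 - alpha)^-1.
Let a := S J / J%:R.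
Let t j := if (j <= J)%N then 1 else h j / a.
Let Q := \sum_(1 <= j < n.+1) t j `^ q.
Let c := v / (a * Q).
Let ys j := c * t j `^ (q - 1).

Let a0' : 0 < alpha. Proof. by case/andP: al. Qed.
Let a1' : alpha < 1. Proof. by case/andP: al. Qed.
Let p1 : 1 < p. Proof. by rewrite /p invf_gt1. Qed.
Let q1 : 1 < q. Proof. move: al => /andP[? ?]; rewrite /q invf_gt1; lra. Qed.
Let q0 : 0 < q. Proof. exact: lt_trans ltr01 q1. Qed.
Let p0 : 0 < p. Proof. exact: lt_trans ltr01 p1. Qed.
Let an0 : alpha != 0. Proof. by rewrite gt_eqF. Qed.
Let an1 : 1 - alpha != 0. Proof. rewrite subr_eq0 eq_sym lt_eqF //. Qed.
Let e1 : (q - 1) * p = q. Proof. by rewrite /p /q; field; rewrite ?an0 ?an1. Qed.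
Let e2 : (q - 1) * (p - 1) = 1. Proof. by rewrite /p /q; field; rewrite ?an0 ?an1. Qed.
Let e3 : (1 - alpha) / alpha = p - 1. Proof. by rewrite /p; field. Qed.
Let e4 : q * (p - 1) = p. Proof. by rewrite /p /q; field; rewrite ?an0 ?an1. Qed.
Let e5 : (1 - alpha) * q = 1. Proof. by rewrite /q; field. Qed.
Let e6 : alpha * p = 1. Proof. by rewrite /p; field. Qed.

Lemma sum_gt0 (F : nat -> R) m k : (m < k)%N -> (forall i, (m <= i < k)%N -> 0 < F i) ->
  0 < \sum_(m <= i < k) F i.
Proof.
move=> mk HF; have := @ltr_sum_nat R m k (fun=> 0) F mk HF.
by rewrite sumr_const_nat mul0rn.
Qed.

Let J0 : (0 : R) < J%:R. Proof. by rewrite ltr0n (J_gt0 W n1 nN). Qed.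

Let SJ0 : 0 < S J.
Proof.
apply: sum_gt0; first by have := J_gt0 W n1 nN; nlia.
move=> i /andP[i1 iJ]; apply: (h_gt0 n1 nN WS) => //.
have := J_le W n1 nN; nlia.
Qed.

Let a0 : 0 < a. Proof. by rewrite /a divr_gt0. Qed.

Let SJa : S J = a * J%:R. Proof. by rewrite /a divfK // gt_eqF. Qed.

Let hJ1 : (J < n)%N -> a <= h J.+1.
Proof.
move=> Jn; have [_ _ TC _] := J_spec W n1 nN.
move: TC; rewrite /trans_cond (_ : (J == n) = false) /=; last first.
  by apply/negbTE; rewrite neq_ltn Jn.
by move=> H; rewrite /a ler_pdivrMr // mulrC.
Qed.

Let hmono i j : (J < i)%N -> (i <= j)%N -> (j <= n)%N -> h i <= h j.
Proof.
move=> Ji; elim: j => [|j IH] ij jn; first by nlia.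
case: (ltngtP i j.+1) => [il|//|-> //]; last by nlia.
apply: le_trans (IH _ _) _; try nlia.
apply: (tail n1 nN WS); nlia.
Qed.

Let t_ge1 j : (1 <= j)%N -> (j <= n)%N -> 1 <= t j.
Proof.
move=> j1 jn; rewrite /t; case: ifP => // /negbT; rewrite -ltnNge => Jj.
rewrite ler_pdivlMr // mul1r; apply: le_trans (hJ1 _) (hmono _ _ _) => //; nlia.
Qed.

Let t_gt0 j : (1 <= j)%N -> (j <= n)%N -> 0 < t j.
Proof. by move=> j1 jn; apply: lt_le_trans (t_ge1 j1 jn). Qed.

Let t_mon j : (1 <= j)%N -> (j < n)%N -> t j <= t j.+1.
Proof.
move=> j1 jn.
case: (leqP j J) => [jJ|Jj].
  rewrite [t j]/t jJ; apply: t_ge1; nlia.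
rewrite /t leqNgt Jj /= leqNgt (_ : (J < j.+1)%N) /=; last by nlia.
by rewrite ler_pM2r ?invr_gt0 //; apply: (tail n1 nN WS) => //; nlia.
Qed.

Let t_hi j : (J < j)%N -> h j = a * t j.
Proof. by move=> Jj; rewrite /t leqNgt Jj /= mulrC divfK // gt_eqF. Qed.

Let t_lo j : (j <= J)%N -> t j = 1.
Proof. by move=> jJ; rewrite /t jJ. Qed.

Lemma splitJ (F : nat -> R) : \sum_(1 <= j < n.+1) F j =
  \sum_(1 <= j < J.+1) F j + \sum_(J.+1 <= j < n.+1) F j.
Proof.
rewrite (@big_cat_nat _ _ _ J.+1) //; have := J_le W n1 nN; have := J_gt0 W n1 nN; nlia.
Qed.

Let Q0 : 0 < Q.
Proof.
apply: sum_gt0 => // i /andP[i1 iJ]; apply: powR_gt0; apply: t_gt0 => //; nlia.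
Qed.

Let QJ : Q = J%:R + \sum_(J.+1 <= j < n.+1) t j `^ q.
Proof.
rewrite /Q splitJ; congr (_ + _).
rewrite (eq_big_nat _ _ (F2 := fun=> 1)); last first.
  by move=> i /andP[_ iJ]; rewrite t_lo ?powR1 //; nlia.
by rewrite sumr_const_nat subn1.
Qed.

Let hsum : \sum_(1 <= j < n.+1) h j * t j `^ (q - 1) = a * Q.
Proof.
rewrite splitJ QJ mulrDr.
congr (_ + _).
  rewrite (eq_big_nat _ _ (F2 := h)); last first.
    by move=> i /andP[_ iJ]; rewrite t_lo ?powR1 ?mulr1 //; nlia.
  by rewrite SJa.
rewrite mulr_sumr; apply: eq_big_nat => i /andP[Ji iJ].
rewrite t_hi // -mulrA mulr_powRB1 //.
by apply: ltW; apply: t_gt0; nlia.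
Qed.

Let tsum : \sum_(1 <= j < n.+1) t j * t j `^ (q - 1) = Q.
Proof.
apply: eq_big_nat => i /andP[i1 iJ]; rewrite mulr_powRB1 //.
by apply: ltW; apply: t_gt0; nlia.
Qed.

Let c0 : 0 <= c.
Proof. by rewrite /c divr_ge0 // ltW // mulr_gt0. Qed.

Lemma ys_feasible : feasible W N n v ys.
Proof.
split; first by rewrite /ys mulr_ge0 // powR_ge0.
split.
  move=> j j1 jn; rewrite /ys ler_wpM2l //.
  apply: ge0_ler_powR; first by have := q1; lra.
  - by rewrite nnegrE ltW // t_gt0 //; nlia.
  - by rewrite nnegrE ltW // t_gt0 //; nlia.
  - exact: t_mon.
rewrite /ys; under eq_bigr do rewrite mulrCA; rewrite -mulr_sumr hsum.
by rewrite /c divfK // gt_eqF // mulr_gt0.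
Qed.

Lemma obj_ys : objective alpha n ys = c `^ p * Q.
Proof.
rewrite /objective /Q mulr_sumr; apply: eq_bigr => j _.
by rewrite /ys powRM // ?powR_ge0 // -powRrM e1 /p.
Qed.

Lemma obj_val : c `^ p * Q = v `^ p / (a `^ p * Q `^ (p - 1)).
Proof.
have aQ : 0 < a * Q by rewrite mulr_gt0.
rewrite /c powRM //; last by rewrite invr_ge0 ltW.
rewrite (@powRV R (a * Q) p aQ) powRM ?ltW //.
rewrite -(mulr_powRB1 (ltW Q0) p0).
have : 0 < a `^ p by rewrite powR_gt0.
have : 0 < Q `^ (p - 1) by rewrite powR_gt0.
move=> H1 H2; field.
by rewrite !gt_eqF.
Qed.

Lemma value_eq :
  v `^ (alpha^-1) *
    (J%:R /
      ((\sum_(1 <= j < J.+1) h j) `^ ((1 - alpha)^-1) +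
       \sum_(J.+1 <= j < n.+1) (J%:R `^ alpha * h j) `^ ((1 - alpha)^-1))
      `^ ((1 - alpha) / alpha)) = v `^ p / (a `^ p * Q `^ (p - 1)).
Proof.
set B := J%:R `^ alpha * a.
have B0 : 0 < B by rewrite mulr_gt0 // powR_gt0.
have T2 : \sum_(J.+1 <= j < n.+1) (J%:R `^ alpha * h j) `^ q =
    B `^ q * \sum_(J.+1 <= j < n.+1) t j `^ q.
  rewrite mulr_sumr; apply: eq_big_nat => i /andP[Ji iJ].
  rewrite t_hi // mulrA powRM // ?ltW //.
  by apply: t_gt0; nlia.
have T1 : (S J) `^ q = B `^ q * J%:R.
  have -> : S J = B * J%:R `^ (1 - alpha).
    rewrite SJa /B [RHS]mulrAC -powRD; last by apply/implyP => _; rewrite gt_eqF.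
    by rewrite addrC subrK powRr1 // mulrC.
  rewrite powRM ?powR_ge0 //; last exact: ltW.
  by rewrite -powRrM e5 powRr1.
rewrite -/q -/p T1 T2 -mulrDr -QJ e3 powRM ?powR_ge0 ?ltW //.
rewrite -powRrM e4 /B powRM ?powR_ge0 //; last exact: ltW.
rewrite -powRrM e6 powRr1 //.
have : 0 < a `^ p by rewrite powR_gt0.
have : 0 < Q `^ (p - 1) by rewrite powR_gt0.
move=> H1 H2; field.
by rewrite !gt_eqF.
Qed.

Lemma lb y : feasible W N n v y -> c `^ p * Q <= objective alpha n y.
Proof.
move=> [y10 [ymon ysum]].
have ypos j : (1 <= j)%N -> (j <= n)%N -> 0 <= y j.
  elim: j => [//|j IH] j1 jn.
  case: (posnP j) => [->//|j0].
  apply: le_trans (IH _ _) (ymon _ _ _); nlia.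
have ys0 j : 0 <= ys j by rewrite /ys mulr_ge0 // powR_ge0.
have tsy : a * \sum_(1 <= j < n.+1) t j * ys j = v.
  rewrite /ys; under eq_bigr do rewrite mulrCA.
  rewrite -mulr_sumr tsum /c; field.
  by rewrite !gt_eqF.
have tyv : v <= a * \sum_(1 <= j < n.+1) t j * y j.
  rewrite -ysum !splitJ mulrDr.
  apply: lerD.
    rewrite (eq_big_nat _ _ (F1 := fun j => t j * y j) (F2 := y)); last first.
      by move=> i /andP[_ iJ]; rewrite t_lo ?mul1r //; nlia.
    by rewrite /a; apply: cheb.
  rewrite mulr_sumr le_eqVlt; apply/orP; left; apply/eqP; apply: eq_big_nat.
  by move=> i /andP[Ji _]; rewrite t_hi ?mulrA //.
have nn : 0 <= \sum_(1 <= j < n.+1) t j * (y j - ys j).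
  have : 0 <= a * \sum_(1 <= j < n.+1) t j * (y j - ys j).
    under eq_bigr do rewrite mulrBr.
    by rewrite sumrB mulrBr tsy subr_ge0.
  by rewrite pmulr_rge0.
rewrite -obj_ys /objective -/p.
apply: (@le_trans _ _ (\sum_(1 <= j < n.+1) (ys j) `^ p +
   p * c `^ (p - 1) * \sum_(1 <= j < n.+1) t j * (y j - ys j))).
  by rewrite lerDl mulr_ge0 // mulr_ge0 ?powR_ge0 // ltW.
rewrite mulr_sumr -big_split; apply: ler_sum_nat => j /andP[j1 jn].
have jn' : (j <= n)%N by nlia.
have := tangent p1 (ypos j j1 jn') (ys0 j).
have -> : ys j `^ (p - 1) = c `^ (p - 1) * t j.
  rewrite /ys powRM ?powR_ge0 // -powRrM e2 powRr1 //.
  by apply: ltW; apply: t_gt0; nlia.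
by rewrite /= !mulrA.
Qed.
End Main.

Unset Implicit Arguments. Set Strict Implicit.
Local Close Scope classical_set_scope.

Theorem corollary1 (R : realType) (N nplus : nat) (alpha : R) (W : R -> R) (v : R) :
  (1 <= nplus)%N -> (nplus <= N)%N ->
  0 < alpha < 1 ->
  inverse_S_shaped W -> W 0 = 0 -> W 1 = 1 ->
  0 <= v ->
  let J := trans_index W N nplus in
  let h := hplus W N nplus in
  let value :=
    v `^ (alpha^-1) *
    (J%:R /
      ((\sum_(1 <= j < J.+1) h j) `^ ((1 - alpha)^-1) +
       \sum_(J.+1 <= j < nplus.+1) (J%:R `^ alpha * h j) `^ ((1 - alpha)^-1))
      `^ ((1 - alpha) / alpha)) in
  (exists y : nat -> R, feasible W N nplus v y /\ objective alpha nplus y = value) /\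
  (forall y : nat -> R, feasible W N nplus v y -> value <= objective alpha nplus y).
Proof.
move=> n1 nN al WS W0 W1 v0 J h value.
rewrite /value /J /h (value_eq v n1 nN al WS).
split.
  eexists; split; first exact: (ys_feasible n1 nN al WS v0).
  by rewrite (obj_ys n1 nN al WS v0) (obj_val n1 nN al WS v0).
move=> y fy; rewrite -(obj_val n1 nN al WS v0); exact: (lb n1 nN al WS v0 fy).
Qed.
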